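(* Fix $\ell \in \{1,2\}$. If $C_{\mathcal{A}_\ell}$ is satisfied by a pointed interpretation $(\mathcal{I}, d)$ (i.e. $d \in (C_{\mathcal{A}_\ell})^{\mathcal{I}}$), then $(\mathcal{I}, d)$ is $\Sigma$-friendly and for every element $e \in \Delta^{\mathcal{I}}$ that is $\mathtt{x}^*$-reachable from $d$ via a path $\rho$ we have $e \in (\mathsf{Acc}_{\mathcal{A}_\ell})^{\mathcal{I}}$ if and only if the $\Sigma$-word represented by $\rho$ belongs to $\mathcal{L}(\mathcal{A}_\ell)$. Moreover, after reinterpreting the concept name $\mathsf{Acc}_{\mathcal{A}_\ell}$, every $\Sigma$-metaword becomes a model of $C_{\mathcal{A}_\ell}$.
   Context: Setting: the description logic $\mathcal{ALC}$ extended with path expressions $\exists \mathcal{L}.C$ / $\forall\mathcal{L}.C$ for visibly-pushdown languages $\mathcal{L}$ (given by visibly-pushdown automata) over role names, and with the Self operator, where $(\exists r.\mathsf{Self})^{\mathcal{I}} = \{ d \mid (d,d) \in r^{\mathcal{I}}\}$. A path $\rho_1\ldots\rho_{n+1}$ in $\mathcal{I}$ is an $\mathcal{L}$-path if some word $w_1\ldots w_n \in \mathcal{L}$ satisfies $(\rho_i,\rho_{i+1}) \in w_i^{\mathcal{I}}$ for all $i$; $e$ is $\mathcal{L}$-reachable from $d$ if there is an $\mathcal{L}$-path from $d$ to $e$; $(\exists\mathcal{L}.C)^{\mathcal{I}}$ is the set of elements that $\mathcal{L}$-reach an element of $C^{\mathcal{I}}$, and $\forall\mathcal{L}.C := \neg\exists\mathcal{L}.\neg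 C$. Fix a finite alphabet $\Sigma$ of role names and deterministic one-counter automata (DOCA) $\mathcal{A}_1, \mathcal{A}_2$ over $\Sigma$; let $\mathcal{C}_1, \mathcal{C}_2$ be DOCA recognizing the complements of $\mathcal{L}(\mathcal{A}_1), \mathcal{L}(\mathcal{A}_2)$. For a DOCA $\mathcal{A}$ over $\Sigma$, $\tilde{\mathcal{A}}$ denotes a visibly-pushdown automaton over the pushdown alphabet $\tilde\Sigma := (\Sigma\times\{c\},\ (\Sigma\times\{i\})\cup\{\mathtt{x}\},\ \Sigma\times\{r\})$ (call, internal, return letters; $\mathtt{x}$ a fresh internal letter, the same for all automata), such that every word in $\mathcal{L}(\tilde{\mathcal{A}})$ has the form $\tilde a_1\mathtt{x}\tilde a_2\mathtt{x}\ldots\mathtt{x}\tilde a_n$ with $\tilde a_j \in \Sigma\times\{c,i,r\}$, and $\mathcal{L}(\mathcal{A}) = \{\pi_1(\tilde a_1)\ldots\pi_1(\tilde a_n) \mid \tilde a_1\mathtt{x}\ldots\mathtt{x}\tilde a_n \in \mathcal{L}(\tilde{\mathcal{A}})\}$, where $\pi_1$ is the projection to the first component. Letters of $\tilde\Sigma$ are treated as role names. A pointed interpretation $(\mathcal{I}, d)$ is $\Sigma$-friendly if for every $e$ that is $\mathtt{x}^*$-reachable from $d$ there is a unique $a\in\Sigma$ such that $e$ carries $\tilde a$-self-loops for all $\tilde a\in\tilde\Sigma$ with $\pi_1(\tilde a)=a$, and no self-loops for all other letters of $\tilde\Sigma$ (including $\mathtt{x}$). This is axiomatised by $C_{\mathrm{fr}}^{\Sigma}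 := \forall \mathtt{x}^*. \bigsqcup_{a\in\Sigma} \sqcap_{b\in\Sigma,\, b\neq a,\, \pi_1(\tilde a)=a,\, \pi_1(\tilde b)=b} \big( \exists\tilde a.\mathsf{Self} \sqcap \neg\exists\tilde b.\mathsf{Self} \sqcap \neg\exists\mathtt{x}.\mathsf{Self}\big)$, where $\sqcap_{\ldots}$ denotes the (finite) conjunction of concepts over all indicated indices. An $\mathtt{x}^*$-path $\rho$ in a $\Sigma$-friendly $(\mathcal{I},d)$ represents the word in $\Sigma^*$ whose $i$-th letter is $a$ iff the $i$-th element of $\rho$ carries an $(a,c)$-self-loop. A $\Sigma$-metaword is a $\Sigma$-friendly $(\mathcal{I}, d)$ with domain $\{0,\ldots,n-1\}$ for some positive $n$, $\mathtt{x}^{\mathcal{I}} = \{(i,i+1) \mid 0\le i\le n-2\}$, and all other role names interpreted as $\emptyset$ or subsets of the diagonal $\{(i,i)\}$. For $\ell\in\{1,2\}$, with a fresh concept name $\mathsf{Acc}_{\mathcal{A}_\ell}$: $C_{\mathcal{A}_\ell} := C_{\mathrm{fr}}^{\Sigma} \sqcap \forall \mathcal{L}(\tilde{\mathcal{A}}_\ell).\mathsf{Acc}_{\mathcal{A}_\ell} \sqcap \forall\mathcal{L}(\tilde{\mathcal{C}}_\ell).\neg\mathsf{Acc}_{\mathcal{A}_\ell}$. *)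

(* Defs.v *)
From mathcomp Require Import all_boot.
Set Implicit Arguments. Unset Strict Implicit. Unset Printing Implicit Defensive.

(* The pushdown alphabet  Sigma~ = (Sigma x {c}, (Sigma x {i}) u {x}, Sigma x {r}) *)
Inductive kind := Call | Int | Ret.

(* a letter of Sigma~ : [Some (a, k)] is (a,k), [None] is the fresh letter x *)
Definition tl (Sig : finType) := option (Sig * kind).
Definition xl {Sig : finType} : tl Sig := None.

Definition kind_of {Sig : finType} (t : tl Sig) : kind :=
  match t with None => Int | Some (_, k) => k end.

Definition proj1_tl {Sig : finType} (t : Sig * kind) : Sig := t.1.

Inductive eff := Dec | Keep | Inc.

Record doca (Sig : finType) := Doca {
  dstate : finType;
  dinit : dstate;
  dfinal : pred dstate;
  (* transition depends on the state, the letter and whether the counter is 0 *)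
  dtrans : dstate -> Sig -> bool -> dstate * eff;
  dwf : forall q a, (dtrans q a true).2 <> Dec }.

Definition dstep {Sig : finType} (A : doca Sig) (cfg : dstate A * nat) (a : Sig)
  : dstate A * nat :=
  let: (q, c) := cfg in
  let: (q', e) := dtrans q a (c == 0) in
  (q', match e with Inc => c.+1 | Keep => c | Dec => c.-1 end).

Definition daccepts {Sig : finType} (A : doca Sig) (w : seq Sig) : Prop :=
  dfinal (foldl (dstep (A := A)) (dinit A, 0) w).1.

(* Visibly-pushdown automata over Sigma~ (acceptance by final state,
   returns on the empty stack allowed). *)
Record vpa (Sig : finType) := Vpa {
  vstate : finType;
  vstack : finType;
  vinit : vstate;
  vfinal : pred vstate;
  vcall : vstate -> tl Sig -> vstack -> vstate -> bool;
  vint  : vstate -> tl Sig -> vstate -> bool;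
  vret  : vstate -> tl Sig -> option vstack -> vstate -> bool }.

Definition vstep {Sig : finType} (V : vpa Sig)
  (cfg : vstate V * seq (vstack V)) (t : tl Sig)
  (cfg' : vstate V * seq (vstack V)) : Prop :=
  let: (q, s) := cfg in let: (q', s') := cfg' in
  match kind_of t with
  | Call => exists g, vcall q t g q' /\ s' = g :: s
  | Int => vint q t q' /\ s' = s
  | Ret => match s with
           | [::] => vret q t None q' /\ s' = [::]
           | g :: s0 => vret q t (Some g) q' /\ s' = s0
           end
  end.

Fixpoint vrun {Sig : finType} (V : vpa Sig) cfg (u : seq (tl Sig)) cfg' : Prop :=
  match u with
  | [::] => cfg' = cfg
  | t :: u' => exists cfg1, @vstep Sig V cfg t cfg1 /\ @vrun Sig V cfg1 u' cfg'
  end.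

Definition vaccepts {Sig : finType} (V : vpa Sig) (u : seq (tl Sig)) : Prop :=
  exists q s, @vrun Sig V (vinit V, [::]) u (q, s) /\ vfinal q.

Fixpoint tword {Sig : finType} (ts : seq (Sig * kind)) : seq (tl Sig) :=
  match ts with
  | [::] => [::]
  | [:: t] => [:: Some t]
  | t :: ts' => Some t :: xl :: tword ts'
  end.

Definition tilde_of {Sig : finType} (A : doca Sig) (At : vpa Sig) : Prop :=
  (forall u, vaccepts At u -> exists ts, ts <> [::] /\ u = tword ts) /\
  (forall w, daccepts A w <->
     exists ts, vaccepts At (tword ts) /\ ts <> [::] /\ w = map proj1_tl ts).

(* Interpretations over domain D: role names are letters of Sigma~, and the
   single concept name Acc. *)
Record interp (Sig : finType) (D : Type) := Interp {
  role : tl Sig -> D -> D -> Prop;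
  acc : D -> Prop }.

Fixpoint walk {Sig : finType} {D : Type} (I : interp Sig D) (w : seq (tl Sig))
  (d e : D) : Prop :=
  match w with
  | [::] => d = e
  | r :: w' => exists m, role I r d m /\ walk I w' m e
  end.

Definition Lreach {Sig : finType} {D : Type} (I : interp Sig D)
  (L : seq (tl Sig) -> Prop) (d e : D) : Prop :=
  exists w, L w /\ walk I w d e.

Definition xstar {Sig : finType} (w : seq (tl Sig)) : Prop := all (fun t : tl Sig => if t is None then true else false) w.

(* Concepts of ALC + Self + path expressions (needed fragment). *)
Inductive concept (Sig : finType) :=
  | CAcc
  | CTop
  | CNeg of concept Sig
  | CAnd of concept Sig & concept Sig
  | COr of concept Sig & concept Sig
  | CSelf of tl Sig
  | CEx of (seq (tl Sig) -> Prop) & concept Sig.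

Arguments CAcc {Sig}. Arguments CTop {Sig}.

Fixpoint sem {Sig : finType} {D : Type} (I : interp Sig D) (C : concept Sig)
  : D -> Prop :=
  match C with
  | CAcc => acc I
  | CTop => fun _ => True
  | CNeg C1 => fun d => ~ sem I C1 d
  | CAnd C1 C2 => fun d => sem I C1 d /\ sem I C2 d
  | COr C1 C2 => fun d => sem I C1 d \/ sem I C2 d
  | CSelf r => fun d => role I r d d
  | CEx L C1 => fun d => exists e, Lreach I L d e /\ sem I C1 e
  end.

Definition CBot {Sig : finType} : concept Sig := CNeg CTop.
Definition CAll {Sig : finType} (L : seq (tl Sig) -> Prop) (C : concept Sig) :=
  CNeg (CEx L (CNeg C)).
Definition bigAnd {Sig : finType} (cs : seq (concept Sig)) := foldr (@CAnd Sig) CTop cs.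
Definition bigOr {Sig : finType} (cs : seq (concept Sig)) := foldr (@COr Sig) CBot cs.

Definition kinds := [:: Call; Int; Ret].

Definition Cfr_at {Sig : finType} (a : Sig) : concept Sig :=
  bigAnd ([seq CSelf (Some (a, k)) | k <- kinds] ++
          [seq CNeg (CSelf (Some (b, k))) | b <- [seq b <- enum Sig | b != a], k <- kinds] ++
          [:: CNeg (CSelf xl)]).

Definition Cfr (Sig : finType) : concept Sig :=
  CAll xstar (bigOr [seq Cfr_at a | a <- enum Sig]).

Definition C_A {Sig : finType} (At Ct : vpa Sig) : concept Sig :=
  CAnd (Cfr Sig) (CAnd (CAll (vaccepts At) CAcc) (CAll (vaccepts Ct) (CNeg CAcc))).

Definition friendly {Sig : finType} {D : Type} (I : interp Sig D) (d : D) : Prop :=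
  forall e, Lreach I xstar d e ->
    exists! a : Sig,
      (forall k, role I (Some (a, k)) e e) /\
      (forall b k, b <> a -> ~ role I (Some (b, k)) e e) /\
      ~ role I xl e e.

Fixpoint xchain {Sig : finType} {D : Type} (I : interp Sig D) (d : D) (p : seq D)
  : Prop :=
  match p with
  | [::] => True
  | y :: p' => role I xl d y /\ xchain I y p'
  end.

Fixpoint represents {Sig : finType} {D : Type} (I : interp Sig D) (rho : seq D)
  (w : seq Sig) : Prop :=
  match rho, w with
  | [::], [::] => True
  | y :: rho', a :: w' => role I (Some (a, Call)) y y /\ represents I rho' w'
  | _, _ => False
  end.

Definition metaword {Sig : finType} {n : nat} (I : interp Sig 'I_n) (d : 'I_n) : Prop :=
  friendly I d /\
  (forall i j : 'I_n, role I xl i j <-> val j = (val i).+1) /\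
  (forall t i j, t <> xl -> role I t i j -> i = j).

Definition with_acc {Sig : finType} {D : Type} (I : interp Sig D) (P : D -> Prop) :=
  Interp (role I) P.

(* Main.v *)
Require Import Defs.
From mathcomp Require Import all_boot.
From Stdlib Require Import Classical. From Stdlib Require List.
Set Implicit Arguments. Unset Strict Implicit.

Section S.
Variable Sig : finType.
Variable D : Type.
Implicit Types (I : interp Sig D).

Lemma sem_bigAnd I cs x : sem I (bigAnd cs) x <-> (forall c, List.In c cs -> sem I c x).
Proof.
elim: cs => [|c cs IH] /=; first by split=> // _ c [].
split=> [[H1 /IH H2] c' [<-|Hc]|H]; [done|by apply H2|].
split; first by apply: H; left.
by apply/IH => c' Hc; apply: H; right.
Qed.

Lemma sem_bigOr I cs x : sem I (bigOr cs) x <-> (exists c, List.In c cs /\ sem I c x).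
Proof.
elim: cs => [|c cs IH] /=; first by split=> [H|[c [[] _]]]; exfalso; apply: H.
split=> [[H|/IH [c' [H1 H2]]]|[c' [[<-|H1] H2]]].
- by exists c; split=> //; left.
- by exists c'; split=> //; right.
- by left.
- by right; apply/IH; exists c'.
Qed.

Lemma In_mem (T : eqType) (x : T) s : List.In x s <-> x \in s.
Proof.
elim: s => [|y s IH] //=; rewrite in_cons; split.
- by case=> [->|/IH ->]; rewrite ?eqxx ?orbT.
- by case/orP=> [/eqP ->|/IH]; [left|right].
Qed.

Lemma In_cat (T : Type) (x : T) (s1 s2 : seq T) :
  List.In x (s1 ++ s2) <-> List.In x s1 \/ List.In x s2.
Proof. exact: List.in_app_iff. Qed.

Lemma In_allpairs (T1 : Type) (f : Sig -> kind -> concept Sig) s c :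
  List.In c [seq f b k | b <- s, k <- kinds] ->
  exists b k, List.In b s /\ c = f b k.
Proof.
elim: s => [|b s IH] //= H.
case: H => [<-|[<-|[<-|H]]]; try by exists b; eexists; split; [left|].
by case: (IH H) => b' [k [H1 H2]]; exists b', k; split=> //; right.
Qed.

Lemma sem_Cfr_at I a x :
  sem I (Cfr_at a) x <->
  ((forall k, role I (Some (a, k)) x x) /\
   (forall b k, b <> a -> ~ role I (Some (b, k)) x x) /\ ~ role I xl x x).
Proof.
rewrite /Cfr_at sem_bigAnd; split.
- move=> H; split; [|split].
  + by case; apply: (H (CSelf _)); simpl; auto.
  + move=> b k Hb; apply: (H (CNeg (CSelf _))).
    apply/In_cat; right; apply/In_cat; left.
    have Hb' : List.In b [seq b <- enum Sig | b != a].
      by apply/In_mem; rewrite mem_filter mem_enum andbT; apply/eqP.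
    move: Hb'; elim: [seq b <- enum Sig | b != a] => [|b' s IH] //= [->|Hs].
      by clear IH; case: k; simpl; auto.
    by right; right; right; apply: IH.
  + apply: (H (CNeg (CSelf _))).
    by apply/In_cat; right; apply/In_cat; right; left.
- move=> [H1 [H2 H3]] c /In_cat [Hc|/In_cat [Hc|Hc]].
  + by move: Hc => /= [<-|[<-|[<-|[]]]]; apply: H1.
  + case: (In_allpairs Sig Hc) => b [k [Hb ->]] /=.
    apply: H2; move/In_mem: Hb; rewrite mem_filter => /andP [/eqP ? _] //.
  + by case: Hc => [<-|[]].
Qed.


Lemma fr_loop I d a : friendly I d -> role I (Some (a, Call)) d d ->
  forall k, role I (Some (a, k)) d d.
Proof.
move=> Hf Ha k.
have [a0 [[H1 [H2 H3]] _]] : exists! a0 : Sig, _ := Hf d (ex_intro _ [::] (conj erefl erefl)).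
case: (eqVneq a a0) => [->|Hne]; first exact: H1.
by exfalso; apply: (H2 a Call) => //; apply/eqP.
Qed.

Lemma fr_same I d a1 k1 a2 k2 : friendly I d -> role I (Some (a1, k1)) d d ->
  role I (Some (a2, k2)) d d -> a1 = a2.
Proof.
move=> Hf Ha1 Ha2.
have [a0 [[H1 [H2 H3]] _]] : exists! a0 : Sig, _ := Hf d (ex_intro _ [::] (conj erefl erefl)).
case: (eqVneq a1 a0) => [->|Hne]; last by exfalso; apply: (H2 a1 k1) => //; apply/eqP.
case: (eqVneq a2 a0) => [->|Hne] //; by exfalso; apply: (H2 a2 k2) => //; apply/eqP.
Qed.

Lemma fr_step I d d' : friendly I d -> role I xl d d' -> friendly I d'.
Proof.
move=> Hf Hx e [w [Hw Hwk]]; apply: Hf; exists (xl :: w); split => //.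
by exists d'.
Qed.

Lemma walk_fr I d p w ts : friendly I d -> xchain I d p -> represents I (d :: p) w ->
  map proj1_tl ts = w -> walk I (tword ts) d (last d p).
Proof.
elim: p d w ts => [|y p IH] d w ts Hf Hc.
- case: w => [|a w] //= [Ha Hr]; case: w Hr => // _.
  case: ts => [|[b k] [|t ts]] //= [Hb]; subst b.
  by exists d; split=> //; apply: fr_loop.
- case: w => [|a w] //= [Ha Hr]; case: Hc => Hx Hc.
  case: ts => [|[b k] ts] //= [Hb Hts]; subst b.
  case: ts Hts => [|t ts] Hts; first by case: w Hr Hts => //; case: p {IH Hc}.
  exists d; split; first exact: fr_loop.
  exists y; split => //.
  apply: IH => //; first exact: (fr_step Hf).
  by rewrite Hts.
Qed.
End S.

Lemma walk_with_acc (Sig : finType) D (I : interp Sig D) P w d e :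
  walk (with_acc I P) w d e <-> walk I w d e.
Proof.
elim: w d => [|r w IH] d //=.
by split=> [[m [H1 /IH H2]]|[m [H1 /IH H2]]]; exists m.
Qed.

Section M.
Variable Sig : finType.
Variable n : nat.
Variable I : interp Sig 'I_n.
Hypothesis H2 : forall i j : 'I_n, role I xl i j <-> val j = (val i).+1.
Hypothesis H3 : forall t i j, t <> xl -> role I t i j -> i = j.

Lemma walk_le w d e : walk I w d e -> val d <= val e.
Proof.
elim: w d => [|r w IH] d /=; first by move=> ->.
move=> [m [Hr /IH Hm]]; case: r Hr => [t|] Hr.
- have E : d = m by apply: (H3 (t := Some t)).
  by rewrite E.
- by move/H2: Hr => Hv; apply: leq_trans Hm; rewrite Hv.
Qed.

Lemma H3' t i j : role I (Some t) i j -> i = j.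
Proof. by apply: H3. Qed.

Lemma meta_same ts1 ts2 d e : friendly I d -> ts1 <> [::] -> ts2 <> [::] ->
  walk I (tword ts1) d e -> walk I (tword ts2) d e ->
  map proj1_tl ts1 = map proj1_tl ts2.
Proof.
elim: ts1 ts2 d => [|[a1 k1] ts1 IH] // [|[a2 k2] ts2] // d Hf _ _.
case: ts1 IH => [|t1 ts1] IH; case: ts2 => [|t2 ts2] /=.
- move=> [m [Hm1 Em1]] [m' [Hm2 Em]].
  have E1 := H3' Hm1; have E2 := H3' Hm2; rewrite -E1 in Hm1; rewrite -E2 in Hm2.
  by rewrite (fr_same Hf Hm1 Hm2).
- move=> [m [Hm1 Em1]] [m' [Hm2 [y [Hy Hw]]]].
  have E1 := H3' Hm1; have E2 := H3' Hm2; rewrite -E2 in Hy.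
  move/H2: Hy => Hy; move/walk_le: Hw; rewrite Hy -Em1 -E1 ltnn //.
- move=> [m' [Hm2 [y [Hy Hw]]]] [m [Hm1 Em1]].
  have E1 := H3' Hm1; have E2 := H3' Hm2; rewrite -E2 in Hy.
  move/H2: Hy => Hy; move/walk_le: Hw; rewrite Hy -Em1 -E1 ltnn //.
- move=> [m [Hm1 [y [Hy Hw]]]] [m' [Hm2 [y' [Hy' Hw']]]].
  have E1 := H3' Hm1; have E2 := H3' Hm2; rewrite -E1 in Hm1 Hy; rewrite -E2 in Hm2 Hy'.
  have Eyy : y = y'.
    by apply: val_inj; move/H2: Hy => ->; move/H2: Hy' => ->.
  subst y'.
  rewrite (fr_same Hf Hm1 Hm2); congr cons.
  exact: (IH (t2 :: ts2) y (fr_step Hf Hy)).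
Qed.
End M.

Lemma In_map_mem (T : eqType) U (f : T -> U) s a : a \in s -> List.In (f a) (map f s).
Proof.
elim: s => [|b s IH] //=; rewrite in_cons => /orP [/eqP ->|/IH Hi]; [by left|by right].
Qed.

Unset Implicit Arguments.
Set Strict Implicit.

Theorem lemma3p3 (Sig : finType) (A Cc : doca Sig) (At Ct : vpa Sig) :
  (* Cc recognizes the complement of L(A) (within the non-empty words) *)
  (forall w : seq Sig, daccepts Cc w <-> (w <> [::] /\ ~ daccepts A w)) ->
  tilde_of A At -> tilde_of Cc Ct ->
  (forall (D : Type) (I : interp Sig D) (d : D),
      sem I (C_A At Ct) d ->
      friendly I d /\
      (forall (p : seq D) (w : seq Sig),
          xchain I d p -> represents I (d :: p) w ->
          (acc I (last d p) <-> daccepts A w))) /\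
  (forall (n : nat) (I : interp Sig 'I_n) (d : 'I_n),
      metaword I d ->
      exists P : 'I_n -> Prop, sem (with_acc I P) (C_A At Ct) d).
Proof.
move=> Hcomp [HA1 HA2] [HC1 HC2]; split.
- move=> D I d [Hfr [HAt HCt]].
  have Hf : friendly I d.
    move=> e He.
    have : sem I (bigOr [seq Cfr_at a | a <- enum Sig]) e.
      by apply: NNPP => Hn; apply: Hfr; exists e.
    move/sem_bigOr => [c [Hc Hs]].
    have [a [Ec _]] : exists a, c = Cfr_at a /\ True.
      move: Hc; elim: (enum Sig) => [|a s IH] //= [Hc|/IH //]; by exists a.
    rewrite Ec in Hs; move/sem_Cfr_at: Hs => [H1 [H2 H3]].
    exists a; split => // b [Hb1 _].
    apply: NNPP => Hne; apply: (H2 b Call); last exact: Hb1.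
    by move=> E; apply: Hne; rewrite E.
  split=> // p w Hc Hr.
  have Hw : w <> [::] by case: w Hr.
  split.
  + move=> Hacc; apply: NNPP => Hna.
    have /HC2 [ts [Hv [Hts Em]]] : daccepts Cc w by apply/Hcomp.
    apply: HCt; exists (last d p); split => //.
    exists (tword ts); split => //; exact: walk_fr Hf Hc Hr (esym Em).
  + move=> /HA2 [ts [Hv [Hts Em]]].
    apply: NNPP => Hna; apply: HAt; exists (last d p); split => //.
    exists (tword ts); split => //; exact: walk_fr Hf Hc Hr (esym Em).
- move=> n I d [Hf [H2 H3]].
  exists (fun e => Lreach I (vaccepts At) d e).
  split; [|split].
  + move=> [e [[w [Hw Hwk]] Hn]]; apply: Hn.
    have [a [[H1 [H2' H3']] _]] := Hf e (ex_intro _ w (conj Hw (proj1 (walk_with_acc _ _ _ _ _) Hwk))).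
    apply/sem_bigOr; exists (Cfr_at a); split; last by apply/sem_Cfr_at.
    have Ha : a \in enum Sig by rewrite mem_enum.
    exact: (In_map_mem Cfr_at Ha).
  + move=> [e [[w [Hw Hwk]] Hn]]; apply: Hn => /=.
    by exists w; split => //; apply: (proj1 (walk_with_acc _ _ _ _ _) Hwk).
  + move=> [e [[w [Hw Hwk]] Hn]]; apply: Hn => /= [[w1 [Hw1 Hwk1]]].
    have {}Hwk := proj1 (walk_with_acc _ _ _ _ _) Hwk.
    have [ts1 [Hts1 E1]] := HA1 _ Hw1; have [ts2 [Hts2 E2]] := HC1 _ Hw; subst w w1.
    have Em := meta_same H2 H3 Hf Hts1 Hts2 Hwk1 Hwk.
    have HAw : daccepts A (map proj1_tl ts1) by apply/HA2; exists ts1.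
    have HCw : daccepts Cc (map proj1_tl ts1) by apply/HC2; exists ts2; rewrite Em.
    by move/Hcomp: HCw => [_ []].
Qed.
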